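(* Let $n\ge d$ and let $\mathcal{M}$ be a linkage $(n,d)$-matching field. Then the flip graph of $\mathcal{M}$ has exactly $\binom{n}{d+1}\cdot d$ edges.
   Context: $L=\{\ell_1,\dots,\ell_n\}$, $R=\{r_1,\dots,r_d\}$. An $(n,d)$-matching field $\mathcal{M}=(M_\sigma)$ assigns to each $d$-subset $\sigma\subseteq L$ a perfect matching $M_\sigma$ between $\sigma$ and $R$; it is linkage if for every $r_i\in R$ and every $(d+1)$-subset $\tau\subseteq L$ there exist distinct $\ell_j,\ell_{j'}\in\tau$ with $M_{\tau\setminus\{\ell_j\}}$ and $M_{\tau\setminus\{\ell_{j'}\}}$ agreeing everywhere except on the edges incident with $r_i$. The flip graph of $\mathcal{M}$ has the matchings $M_\sigma$ as nodes, two matchings being adjacent if and only if they differ in exactly one edge (i.e. agree everywhere except on the edge incident with a single right node). *)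

(* Defs.v *)
From mathcomp Require Import all_boot.
Set Implicit Arguments. Unset Strict Implicit. Unset Printing Implicit Defensive.

(* L = 'I_n (left nodes l_1..l_n), R = 'I_d (right nodes r_1..r_d).
   A perfect matching between sigma (a d-subset of L) and R is encoded as a
   function m : R -> L that is injective with image exactly sigma; the edge
   set of the matching is {(m r, r) | r in R}. *)

Definition is_perfect_matching (n d : nat) (sigma : {set 'I_n})
  (m : {ffun 'I_d -> 'I_n}) : bool :=
  injectiveb m && ([set m r | r : 'I_d] == sigma).

(* An (n,d)-matching field: a family M indexed by subsets of L, such that for
   every d-subset sigma, M sigma is a perfect matching between sigma and R
   (values of M on other subsets are irrelevant). *)
Definition matching_field (n d : nat) (M : {set 'I_n} -> {ffun 'I_d -> 'I_n}) : Prop :=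
  forall sigma : {set 'I_n}, #|sigma| = d -> is_perfect_matching sigma (M sigma).

Definition agree_except (n d : nat) (m1 m2 : {ffun 'I_d -> 'I_n}) (r : 'I_d) : bool :=
  [forall r' : 'I_d, (r' != r) ==> (m1 r' == m2 r')].

Definition linkage (n d : nat) (M : {set 'I_n} -> {ffun 'I_d -> 'I_n}) : Prop :=
  forall (r : 'I_d) (tau : {set 'I_n}), #|tau| = d.+1 ->
    exists j j' : 'I_n, [/\ j \in tau, j' \in tau, j != j' &
      agree_except (M (tau :\ j)) (M (tau :\ j')) r].

Definition differ_in_one_edge (n d : nat) (m1 m2 : {ffun 'I_d -> 'I_n}) : bool :=
  #|[set r : 'I_d | m1 r != m2 r]| == 1.

(* Edges of the flip graph: unordered pairs {sigma, sigma'} of distinct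
   d-subsets of L whose matchings differ in exactly one edge.  (Distinct
   d-subsets have distinct matchings, so nodes = d-subsets.) *)
Definition flip_edges (n d : nat) (M : {set 'I_n} -> {ffun 'I_d -> 'I_n})
  : {set {set {set 'I_n}}} :=
  [set E : {set {set 'I_n}} | [exists s1 : {set 'I_n}, exists s2 : {set 'I_n},
     [&& E == [set s1; s2], s1 != s2, #|s1| == d, #|s2| == d &
         differ_in_one_edge (M s1) (M s2)]]].

(* Main.v *)
Require Import Defs.
From mathcomp Require Import all_boot zify.
Set Implicit Arguments. Unset Strict Implicit. Unset Printing Implicit Defensive.

Lemma agree_sym n d (m1 m2 : {ffun 'I_d -> 'I_n}) r :
  agree_except m1 m2 r = agree_except m2 m1 r.
Proof.
rewrite /agree_except; apply: eq_forallb => q.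
by rewrite [m1 q == _]eq_sym.
Qed.

Definition Pp n d (M : {set 'I_n} -> {ffun 'I_d -> 'I_n}) (t : {set 'I_n}) (r : 'I_d)
  (p : 'I_n * 'I_n) :=
  [&& p.1 \in t, p.2 \in t, p.1 != p.2 & agree_except (M (t :\ p.1)) (M (t :\ p.2)) r].

Lemma arith1 d x y z w u : w = d.+1 - z -> z <= d.+1 -> x < z -> y < w -> d <= x + y - u -> False.
Proof. lia. Qed.
Lemma arith2 q q1 q2 u D D1 D2 : D = D1 + D2 -> q1 < D1 -> q2 < D2 -> q <= q1 + q2 - u -> q < D.
Proof. lia. Qed.
Lemma arith3 d m x y z w : z <= y -> x + y = d -> z = d.+1 - w -> w <= d.+1 -> w < m.+1 -> x < w.
Proof. lia. Qed.

Section Core.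
Variables (n d : nat) (M : {set 'I_n} -> {ffun 'I_d -> 'I_n}).
Hypothesis hM : matching_field M.
Variable t : {set 'I_n}.
Hypothesis ht : #|t| = d.+1.

Local Notation N j := (M (t :\ j)).

Lemma N_pm j : j \in t -> is_perfect_matching (t :\ j) (N j).
Proof.
move=> jt; apply: hM; move: (cardsD1 j t); rewrite jt ht add1n.
by case.
Qed.

Lemma N_mem j q : j \in t -> N j q \in t :\ j.
Proof.
move=> jt; move: (N j) (N_pm jt) => m /andP [_ /eqP <-].
by apply/imsetP; exists q.
Qed.

Lemma N_ex j x : j \in t -> x \in t :\ j -> exists q, N j q = x.
Proof.
move=> jt; move: (N j) (N_pm jt) => m /andP [_ /eqP <-].
by case/imsetP => q _ ->; exists q.
Qed.

Lemma flip_val j k r : j \in t -> k \in t -> j != k ->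
  agree_except (N j) (N k) r -> N j r = k.
Proof.
move=> jt kt jk /forallP H.
have [q Hq] : exists q, N j q = k by apply: N_ex; rewrite // in_setD1 eq_sym jk kt.
case: (eqVneq q r) => [<- //|qr].
move: (H q); rewrite qr /= => /eqP Ek.
by move: (N_mem q kt); rewrite -Ek Hq in_setD1 eqxx.
Qed.

Variables a b : 'I_d -> 'I_n.
Hypothesis Hab : forall q, Pp M t q (a q, b q).

Lemma Ha q : a q \in t. Proof. by case/and4P: (Hab q). Qed.
Lemma Hb q : b q \in t. Proof. by case/and4P: (Hab q). Qed.
Lemma Hne q : a q != b q. Proof. by case/and4P: (Hab q). Qed.
Lemma Hag q : agree_except (N (a q)) (N (b q)) q. Proof. by case/and4P: (Hab q). Qed.
Lemma Hva q : N (a q) q = b q. Proof. exact: flip_val (Ha q) (Hb q) (Hne q) (Hag q). Qed.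
Lemma Hvb q : N (b q) q = a q.
Proof. by apply: flip_val (Hb q) (Ha q) _ _; rewrite 1?eq_sym ?Hne // agree_sym Hag. Qed.

Definition closedE (E : {set 'I_d}) (D : {set 'I_n}) :=
  [forall q in E, (a q \in D) == (b q \in D)].
Definition QE (E : {set 'I_d}) (D : {set 'I_n}) := [set q in E | a q \in D].

Lemma closedP (E : {set 'I_d}) (D : {set 'I_n}) q : closedE E D -> q \in E -> (a q \in D) = (b q \in D).
Proof. by move/forallP => /(_ q) /implyP H /H /eqP. Qed.

Lemma ineq (E : {set 'I_d}) (D : {set 'I_n}) : D \subset t -> D != set0 -> closedE E D -> #|QE E D| < #|D|.
Proof.
elim: {D}#|D|.+1 {-2}D (ltnSn #|D|) => // m IH D leDm sDt nD cD.
case: (boolP [exists D1 : {set 'I_n}, [&& D1 \proper D, D1 != set0 & closedE E D1]]).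
- case/existsP => D1 /and3P [pD1 nD1 cD1].
  have sD1 : D1 \subset D := proper_sub pD1.
  have cD2 : closedE E (D :\: D1).
    apply/forallP => q; apply/implyP => qE.
    by rewrite !in_setD (closedP cD qE) (closedP cD1 qE).
  have nD2 : D :\: D1 != set0.
    case/properP: pD1 => _ [x xD xD1]; apply/set0Pn; exists x.
    by rewrite in_setD xD xD1.
  have HQ : QE E D \subset QE E D1 :|: QE E (D :\: D1).
    apply/subsetP => q; rewrite !inE => /andP [qE aD].
    by rewrite qE /=; case: (a q \in D1).
  have cardD : #|D| = #|D1| + #|D :\: D1|.
    by rewrite -(cardsID D1 D) (setIidPr sD1).
  have lt1 := proper_card pD1.
  have lt2 : #|D :\: D1| < #|D|.
    case/set0Pn: nD1 => x xD1; rewrite cardD -add1n leq_add2r lt0n.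
    by apply/eqP => /cards0_eq E0; move: xD1; rewrite E0 inE.
  have i1 := IH D1 (leq_trans lt1 leDm) (subset_trans sD1 sDt) nD1 cD1.
  have i2 := IH (D :\: D1) (leq_trans lt2 leDm) (subset_trans (subsetDl _ _) sDt) nD2 cD2.
  have := subset_leq_card HQ; rewrite cardsU.
  exact: arith2 cardD i1 i2.
- rewrite negb_exists => /forallP Hmin.
  case/set0Pn: nD => j0 j0D.
  have j0t : j0 \in t := subsetP sDt _ j0D.
  have sub : t :\: D \subset [set N j0 q | q in ~: QE E D].
    apply/subsetP => w; rewrite in_setD => /andP [wD wt].
    have wj0 : w \in t :\ j0.
      by rewrite in_setD1 wt andbT; apply: contraNneq wD => ->.
    case: (N_ex j0t wj0) => p Hp.
    apply/imsetP; exists p => //.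
    rewrite in_setC inE; apply/negP => /andP [pE apD].
    set D' := [set k in D | N k p == w].
    have bpD : b p \in D by rewrite -(closedP cD pE).
    move: (Hmin D'); rewrite negb_and => /orP [] /negP; apply.
    + rewrite properE; apply/andP; split.
        by apply/subsetP => k; rewrite inE => /andP [].
      apply/negP => /subsetP /(_ _ apD); rewrite inE Hva apD /=.
      by move/eqP => E1; move: wD; rewrite -E1 bpD.
    + apply/andP; split.
        by apply/set0Pn; exists j0; rewrite inE j0D Hp eqxx.
      apply/forallP => q; apply/implyP => qE; rewrite !inE (closedP cD qE).
      case: (eqVneq q p) => [->|qp].
        rewrite Hva Hvb bpD /=.
        have -> : (b p == w) = false by apply/negP => /eqP E1; move: wD; rewrite -E1 bpD.
        have -> : (a p == w) = false by apply/negP => /eqP E1; move: wD; rewrite -E1 apD.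
        by [].
      move/forallP: (Hag q) => /(_ p); rewrite eq_sym qp /= => /eqP ->.
      by [].
  have c1 := subset_leq_card sub.
  have c2 := leq_trans c1 (leq_imset_card _ _).
  clear c1 sub.
  have c3 := cardsC (QE E D).
  rewrite card_ord in c3.
  have c4 : #|t :\: D| = #|t| - #|D| by rewrite cardsD (setIidPr sDt).
  have c5 := subset_leq_card sDt.
  rewrite ht in c4 c5.
  move: c2 c3 c4 c5 leDm; move: #|QE E D| #|~: QE E D| #|t :\: D| #|D| => x y z w; exact: arith3.
Qed.

Lemma core j r : j \in t -> N j r = a r \/ N j r = b r.
Proof.
move=> jt.
set E' := [set~ r].
have Pt : (j \in t) && closedE E' t && (t \subset t).
  rewrite jt subxx andbT /=; apply/forallP => q; apply/implyP => _.
  by rewrite Ha Hb.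
case: (@arg_minnP _ t (fun D : {set 'I_n} => (j \in D) && closedE E' D && (D \subset t)) (fun D : {set 'I_n} => #|D|) Pt) => C /andP [/andP [jC cC] sCt] minC.
set D := [set k in C | N k r == N j r].
have DC : D = C.
  apply/eqP; rewrite eqEcard; apply/andP; split.
    by apply/subsetP => k; rewrite inE => /andP [].
  apply: minC; rewrite inE jC eqxx /=; apply/andP; split.
    apply/forallP => q; apply/implyP => qE; rewrite !inE (closedP cC qE).
    move: qE; rewrite !inE => qr.
    move/forallP: (Hag q) => /(_ r); rewrite eq_sym qr /= => /eqP ->.
    by [].
  apply/subsetP => k; rewrite inE => /andP [kC _]; exact: subsetP sCt _ kC.
have cst k : k \in C -> N k r = N j r.
  by rewrite -DC inE => /andP [_ /eqP].
case arC: (a r \in C).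
  by right; rewrite -(cst _ arC) Hva.
case brC: (b r \in C).
  by left; rewrite -(cst _ brC) Hvb.
exfalso.
have cCT : closedE setT C.
  apply/forallP => q; apply/implyP => _.
  case: (eqVneq q r) => [->|qr]; first by rewrite arC brC.
  by apply/eqP; apply: closedP cC _; rewrite !inE qr.
set S := t :\: C.
have cST : closedE setT S.
  apply/forallP => q; apply/implyP => _.
  by rewrite !in_setD Ha Hb (closedP cCT (in_setT q)).
have nC : C != set0 by apply/set0Pn; exists j.
have nS : S != set0 by apply/set0Pn; exists (a r); rewrite in_setD arC Ha.
have i1 := ineq sCt nC cCT.
have i2 := ineq (subsetDl _ _) nS cST.
have HQ : [set: 'I_d] \subset QE setT C :|: QE setT S.
  apply/subsetP => q _; rewrite !inE Ha andbT.
  by case: (a q \in C).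
have := subset_leq_card HQ; rewrite cardsT card_ord cardsU.
have c4 : #|S| = #|t| - #|C| by rewrite cardsD (setIidPr sCt).
have c5 := subset_leq_card sCt.
rewrite ht in c4 c5.
move: c4 c5 i1 i2; move: #|QE setT C| #|QE setT S| #|C| #|S| #|QE setT C :&: QE setT S| => x y z w u; exact: arith1.
Qed.

Lemma uniq_pair r c e : c \in t -> e \in t -> c != e ->
  agree_except (N c) (N e) r ->
  (c = a r /\ e = b r) \/ (c = b r /\ e = a r).
Proof.
move=> ct et ce H.
have v1 := flip_val ct et ce H.
have v2 : N e r = c by apply: flip_val; rewrite // 1?eq_sym // agree_sym.
have n1 := Hne r.
case: (core r ct); case: (core r et); rewrite v1 v2 => E1 E2;
  rewrite E1 E2 in ce *; first [by left | by right | by rewrite eqxx in ce].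
Qed.

End Core.

Lemma mk_ab n d (M : {set 'I_n} -> {ffun 'I_d -> 'I_n}) (t : {set 'I_n}) (j0 : 'I_n) :
  #|t| = d.+1 -> linkage M ->
  exists a b : 'I_d -> 'I_n, forall q, Pp M t q (a q, b q).
Proof.
move=> ht hL.
exists (fun q => (odflt (j0, j0) [pick p | Pp M t q p]).1).
exists (fun q => (odflt (j0, j0) [pick p | Pp M t q p]).2).
move=> q /=; case: pickP => [[x y] //|H].
case: (hL q t ht) => j [j' [jt j't jj' ag]].
by move: (H (j, j')); rewrite /Pp /= jt j't jj' ag.
Qed.

Definition fE n d (M : {set 'I_n} -> {ffun 'I_d -> 'I_n}) (x : {set 'I_n} * 'I_d)
  : {set {set 'I_n}} :=
  if [pick p | Pp M x.1 x.2 p] is Some p then [set x.1 :\ p.1; x.1 :\ p.2] else set0.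

Lemma fE_eq n d (M : {set 'I_n} -> {ffun 'I_d -> 'I_n}) (t : {set 'I_n}) (r : 'I_d) :
  #|t| = d.+1 -> linkage M ->
  exists p, Pp M t r p /\ fE M (t, r) = [set t :\ p.1; t :\ p.2].
Proof.
move=> ht hL; rewrite /fE /=; case: pickP => [p Hp|H]; first by exists p.
case: (hL r t ht) => j [j' [jt j't jj' ag]].
by move: (H (j, j')); rewrite /Pp /= jt j't jj' ag.
Qed.

Lemma setD1_inj n (t : {set 'I_n}) j k : j \in t -> k \in t -> t :\ j = t :\ k -> j = k.
Proof.
move=> jt kt E; apply/eqP; apply/negPn/negP => jk.
have : j \in t :\ k by rewrite in_setD1 jk jt.
by rewrite -E in_setD1 eqxx.
Qed.

Lemma cover2 n (t : {set 'I_n}) j k : j \in t -> k \in t -> j != k ->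
  forall x, (x \in t) = [exists s in [set t :\ j; t :\ k], x \in s].
Proof.
move=> jt kt jk x; apply/idP/existsP.
- move=> xt; case: (eqVneq x j) => [->|xj].
  + by exists (t :\ k); rewrite in_set2 eqxx orbT /= in_setD1 jk jt.
  + by exists (t :\ j); rewrite in_set2 eqxx /= in_setD1 xj xt.
- case=> s /andP [sE xs]; move: sE; rewrite in_set2 => /orP [] /eqP Es;
  by move: xs; rewrite Es in_setD1 => /andP [].
Qed.

Lemma flip_struct n d (s1 s2 : {set 'I_n}) (m1 m2 : {ffun 'I_d -> 'I_n}) r :
  is_perfect_matching s1 m1 -> is_perfect_matching s2 m2 ->
  [set q | m1 q != m2 q] = [set r] ->
  [/\ m2 r \notin s1, (forall y, y \in s2 -> y != m2 r -> y \in s1),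
      (forall q, q != r -> m1 q = m2 q) & m2 r \in s2].
Proof.
move=> /andP [/injectiveP i1 /eqP e1] /andP [/injectiveP i2 /eqP e2] Hr.
have ag q : q != r -> m1 q = m2 q.
  move=> qr; apply/eqP; move: qr; apply: contraNT => H.
  by rewrite -in_set1 -Hr inE.
have d12 : m1 r != m2 r.
  have : r \in [set q | m1 q != m2 q] by rewrite Hr set11.
  by rewrite inE.
split.
- rewrite -e1; apply/negP => /imsetP [q _ Eq].
  case: (eqVneq q r) => [qr|qr].
    by subst; rewrite Eq eqxx in d12.
  rewrite (ag q qr) in Eq; move: (i2 _ _ Eq) => rq.
  by rewrite rq eqxx in qr.
- move=> y; rewrite -e2 -e1 => /imsetP [q _ ->] yq; apply/imsetP; exists q => //.
  have qr : q != r by apply: contraNneq yq => ->.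
  by rewrite ag.
- exact: ag.
- by rewrite -e2; apply/imsetP; exists r.
Qed.

Theorem lemma3p38 (n d : nat) (M : {set 'I_n} -> {ffun 'I_d -> 'I_n}) :
  d <= n -> matching_field M -> linkage M ->
  #|flip_edges M| = 'C(n, d.+1) * d.
Proof.
move=> hdn hM hL.
pose A := [set x : {set 'I_n} * 'I_d | #|x.1| == d.+1].
have cardA : #|A| = 'C(n, d.+1) * d.
  have -> : A = setX [set s : {set 'I_n} | #|s| == d.+1] [set: 'I_d].
    by apply/setP => -[s q]; rewrite in_setX !inE andbT.
  by rewrite cardsX card_draws card_ord cardsT card_ord.
have inj : {in A &, injective (fE M)}.
  move=> [t r] [t' r']; rewrite !inE /= => /eqP ht /eqP ht' Eq.
  case: (fE_eq r ht hL) => p [Hp Ex]; case: (fE_eq r' ht' hL) => p' [Hp' Ex'].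
  have Hp0 := Hp; have Hp0' := Hp'.
  case/and4P: Hp0 => p1t p2t p12 ag; case/and4P: Hp0' => p1t' p2t' p12' ag'.
  have tt' : t = t'.
    apply/setP => x.
    by rewrite (cover2 p1t p2t p12 x) (cover2 p1t' p2t' p12' x) -Ex -Ex' Eq.
  subst t'.
  have m1 : t :\ p.1 \in [set t :\ p'.1; t :\ p'.2] by rewrite -Ex' -Eq Ex in_set2 eqxx.
  have m2 : t :\ p.2 \in [set t :\ p'.1; t :\ p'.2] by rewrite -Ex' -Eq Ex in_set2 eqxx orbT.
  have ag2 : agree_except (M (t :\ p.1)) (M (t :\ p.2)) r'.
    move: m1 m2; rewrite !in_set2 => /orP [] /eqP E1 /orP [] /eqP E2.
    - by move: p12; rewrite (setD1_inj p1t p2t (etrans E1 (esym E2))) eqxx.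
    - by rewrite E1 E2.
    - by rewrite E1 E2 agree_sym.
    - by move: p12; rewrite (setD1_inj p1t p2t (etrans E1 (esym E2))) eqxx.
  congr (_, _); apply/eqP; apply/negPn/negP => rr'.
  have v1 := flip_val hM ht p1t p2t p12 ag.
  have v2 : M (t :\ p.2) r = p.1.
    by apply: flip_val => //; rewrite 1?eq_sym // agree_sym.
  move/forallP: ag2 => /(_ r); rewrite rr' /= v1 v2 => /eqP E.
  by move: p12; rewrite E eqxx.
have img : flip_edges M = fE M @: A.
  apply/setP => E; apply/idP/idP.
  - rewrite inE => /existsP [s1 /existsP [s2 /and5P [/eqP EE s12 /eqP c1 /eqP c2 dif]]].
    case/cards1P: dif => r Hr.
    have Hr' : [set q | M s2 q != M s1 q] = [set r].
      by rewrite -Hr; apply/setP => q; rewrite !inE eq_sym.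
    case: (flip_struct (hM _ c1) (hM _ c2) Hr) => nx2 sub2 ag x2s2.
    case: (flip_struct (hM _ c2) (hM _ c1) Hr') => nx1 sub1 _ x1s1.
    set t := s1 :|: s2.
    have e1 : t :\ (M s2 r) = s1.
      apply/setP => y; rewrite !inE.
      case ys1: (y \in s1).
        by rewrite andbT; apply: contraNneq nx2 => <-; rewrite ys1.
      apply/negbTE/andP => -[yn ys2].
      by rewrite (sub2 y ys2 yn) in ys1.
    have e2 : t :\ (M s1 r) = s2.
      apply/setP => y; rewrite !inE.
      case ys2: (y \in s2).
        by rewrite orbT andbT; apply: contraNneq nx1 => <-; rewrite ys2.
      rewrite orbF; apply/negbTE/andP => -[yn ys1].
      by rewrite (sub1 y ys1 yn) in ys2.
    have x2t : M s2 r \in t by rewrite inE x2s2 orbT.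
    have x1t : M s1 r \in t by rewrite inE x1s1.
    have x12 : M s2 r != M s1 r.
      by apply: contraNneq nx2 => ->.
    have ht : #|t| = d.+1.
      by rewrite (cardsD1 (M s2 r) t) x2t e1 c1.
    have ag1 : agree_except (M s1) (M s2) r.
      by apply/forallP => q; apply/implyP => qr; rewrite ag.
    have At : (t, r) \in A by rewrite inE /= ht.
    apply/imsetP; exists (t, r) => //.
    case: (fE_eq r ht hL) => p [Hp ->]; rewrite EE.
    have Hp0 := Hp; case/and4P: Hp0 => p1t p2t p12 agp.
    case: (mk_ab (M s1 r) ht hL) => a [b Hab].
    have U1 := uniq_pair hM ht Hab p1t p2t p12 agp.
    have U2 : (M s2 r = a r /\ M s1 r = b r) \/ (M s2 r = b r /\ M s1 r = a r).
      apply: (uniq_pair hM ht Hab x2t x1t x12).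
      by rewrite e1 e2.
    case: U1 => [[P1 P2]|[P1 P2]]; case: U2 => [[Q1 Q2]|[Q1 Q2]].
    + by rewrite P1 P2 -Q1 -Q2 e1 e2.
    + by rewrite P1 P2 -Q1 -Q2 e1 e2 setUC.
    + by rewrite P1 P2 -Q1 -Q2 e1 e2 setUC.
    + by rewrite P1 P2 -Q1 -Q2 e1 e2.
  - case/imsetP => -[t r]; rewrite inE /= => /eqP ht ->.
    case: (fE_eq r ht hL) => p [Hp ->].
    case/and4P: Hp => p1t p2t p12 ag.
    have cD j : j \in t -> #|t :\ j| == d.
      by move=> jt; move: (cardsD1 j t); rewrite jt ht add1n => -[<-].
    rewrite inE; apply/existsP; exists (t :\ p.1); apply/existsP; exists (t :\ p.2).
    apply/and5P; split => //.
    + by apply: contra p12 => /eqP /(setD1_inj p1t p2t) ->.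
    + exact: cD.
    + exact: cD.
    + rewrite /differ_in_one_edge; apply/cards1P; exists r; apply/setP => q; rewrite !inE.
      case: (eqVneq q r) => [->|qr].
        rewrite (flip_val hM ht p1t p2t p12 ag).
        have v2 : M (t :\ p.2) r = p.1.
          by apply: flip_val => //; rewrite 1?eq_sym // agree_sym.
        by rewrite v2 eq_sym p12.
      move/forallP: ag => /(_ q); rewrite qr /= => /eqP ->.
      by rewrite eqxx.
by rewrite img card_in_imset.
Qed.
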